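(* Let $\sigma=\{\gamma_d(s_1),\dots\}$ and $\tau$ be simplices on $\gamma_d$ (finite subsets of $\gamma_d$ of size at most $d+1$) which are $(d+2)$-interlacing, where the interlacing sequence begins with an element of $\sigma$ if $d$ is even, and begins with an element of $\tau$ if $d$ is odd. Then there is a point $p\in\mathrm{conv}(\sigma)\cap\mathrm{conv}(\tau)$ with $h_\sigma(p)<h_\tau(p)$.
   Context: $\gamma_d=\{(t,t^2,\dots,t^d):t\in\mathbb{R}\}$ is the moment curve in $\mathbb{R}^d$, and points of $\gamma_d$ are linearly ordered by their parameter $t$. For subsets $\sigma,\tau\subseteq\gamma_d$, they are $k$-interlacing if there is a sequence $v_1<v_2<\dots<v_k$ of elements of $\sigma\cup\tau$ such that either $v_1\in\sigma, v_2\in\tau, v_3\in\sigma,\dots$ (alternating, beginning with an element of $\sigma$) or $v_1\in\tau,v_2\in\sigma,v_3\in\tau,\dots$ (alternating, beginning with an element of $\tau$). For a simplex $\sigma=\{\gamma_d(t_1),\dots,\gamma_d(t_k)\}$, $k\le d+1$, its lifting is $\hat\sigma=\{\gamma_{d+1}(t_1),\dots,\gamma_{d+1}(t_k)\}$, and the height function $h_\sigma:\mathrm{conv}(\sigma)\to\mathbb{R}$ assigns to $p$ the last coordinate of the unique point of $\mathrm{conv}(\hat\sigma)$ whose projection (deleting the last coordinate) is $p$. *)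

(* Defs.v *)
From mathcomp Require Import all_boot all_order all_algebra.
Unset Strict Implicit. Unset Printing Implicit Defensive.
Import Order.TTheory GRing.Theory Num.Theory.
Local Open Scope ring_scope.

Section Moment.
Variable R : realFieldType.

Definition gamma (d : nat) (t : R) : 'rV[R]_d := \row_(i < d) t ^+ i.+1.

(* A simplex on gamma_d is given by the (distinct) parameters of its vertices;
   at most d+1 vertices. *)
Definition is_simplex (d : nat) (S : seq R) : bool := uniq S && (size S <= d.+1)%N.

Definition in_conv (d : nat) (S : seq R) (p : 'rV[R]_d) : Prop :=
  exists lam : R -> R,
    (forall t, t \in S -> 0 <= lam t) /\
    \sum_(t <- S) lam t = 1 /\
    p = \sum_(t <- S) lam t *: gamma d t.

Definition proj_last (d : nat) (q : 'rV[R]_d.+1) : 'rV[R]_d :=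
  \row_(i < d) q 0 (widen_ord (leqnSn d) i).
Definition last_coord (d : nat) (q : 'rV[R]_d.+1) : R := q 0 ord_max.

(* y is the height h_S(p): y is the last coordinate of a point of conv(S^)
   (the lifting of S to gamma_{d+1}) whose projection is p.
   (Such a point is unique, so this relation is the graph of h_S on conv(S).) *)
Definition is_height (d : nat) (S : seq R) (p : 'rV[R]_d) (y : R) : Prop :=
  exists q : 'rV[R]_d.+1, in_conv d.+1 S q /\ proj_last d q = p /\ last_coord d q = y.

Definition interlacing_from (A B : seq R) (k : nat) : Prop :=
  exists v : seq R, size v = k /\ sorted <%R v /\
    (forall i, (i < k)%N -> nth 0 v i \in (if odd i then B else A)).

End Moment.

Arguments gamma {R}.
Arguments is_simplex {R}.
Arguments in_conv {R}.
Arguments proj_last {R}.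
Arguments last_coord {R}.
Arguments is_height {R}.
Arguments interlacing_from {R}.

(* Main.v *)
Require Import Defs.
From mathcomp Require Import all_boot all_order all_algebra.
From mathcomp Require Import ring lra.
Import Order.TTheory GRing.Theory Num.Theory.
Local Open Scope ring_scope.

Section Lag.
Variable R : realFieldType.
Implicit Types (v : seq R) (t : R).

Definition Lp v t : {poly R} := \prod_(s <- rem t v) ('X - s%:P).
Definition wt v t : R := (\prod_(s <- rem t v) (t - s))^-1.

Lemma Lp_size v t : t \in v -> size (Lp v t) = size v.
Proof.
move=> tv; rewrite /Lp size_prod_XsubC size_rem //.
by case: v tv => //.
Qed.

Lemma prod_nz v t : uniq v -> \prod_(s <- rem t v) (t - s) != 0.
Proof.
move=> uv; rewrite prodf_seq_neq0; apply/allP => s sin /=.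
rewrite subr_eq0; apply/eqP => ts; subst s.
by rewrite mem_rem_uniqF in sin.
Qed.

Lemma Lp_ev v t u : uniq v -> u \in v -> u != t ->
  (Lp v t).[u] = 0.
Proof.
move=> uv uin ut; rewrite /Lp horner_prod.
rewrite (bigD1_seq u) ?rem_uniq ?rem_mem //=.
by rewrite hornerXsubC subrr mul0r.
Qed.

Lemma Lp_evt v t : (Lp v t).[t] = \prod_(s <- rem t v) (t - s).
Proof. by rewrite /Lp horner_prod; apply: eq_bigr => s _; rewrite hornerXsubC. Qed.

Lemma lagrange_coef v (f : {poly R}) : uniq v -> (size f <= size v)%N ->
  \sum_(t <- v) f.[t] * wt v t = f`_(size v).-1.
Proof.
move=> uv szf.
set g := f - \sum_(t <- v) (f.[t] * wt v t) *: Lp v t.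
have szg : (size g <= size v)%N.
  rewrite /g (leq_trans (size_add _ _)) // geq_max szf size_opp.
  rewrite (leq_trans (size_sum _ _ _)) //; apply/bigmax_leqP_seq => t tv _.
  by rewrite (leq_trans (size_scale_leq _ _)) // Lp_size.
have rg : all (root g) v.
  apply/allP => u uv'; rewrite /root /g hornerD hornerN horner_sum.
  rewrite (bigD1_seq u) //= big1_seq.
    rewrite addr0 hornerZ Lp_evt /wt -mulrA mulVf ?prod_nz // mulr1 subrr //.
  by move=> t /andP[tu tv]; rewrite hornerZ Lp_ev // ?mulr0 // eq_sym.
have g0 : g = 0.
  apply/eqP; apply: contraT => gn0.
  by have := max_poly_roots gn0 rg uv; rewrite ltnNge szg.
have := congr1 (fun p : {poly R} => p`_(size v).-1) g0.
rewrite /g coefB coef_sum coef0 => /eqP; rewrite subr_eq0 => /eqP ->.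
apply: eq_big_seq => t tv; rewrite coefZ.
by rewrite -(@Lp_size v t tv) -lead_coefE (eqP (monic_prod_XsubC _ _ _)) mulr1.
Qed.


Lemma moments v k : uniq v -> (k < size v)%N ->
  \sum_(t <- v) wt v t * t ^+ k = (k == (size v).-1)%:R.
Proof.
move=> uv kv; have := @lagrange_coef v 'X^k uv.
rewrite size_polyXn => /(_ kv); rewrite coefXn eq_sym => <-.
by apply: eq_bigr => t _; rewrite hornerXn mulrC.
Qed.

Lemma uniq_coeffs (S : seq R) (n : nat) (dl : R -> R) :
  uniq S -> (size S <= n.+1)%N ->
  (forall k, (k <= n)%N -> \sum_(t <- S) dl t * t ^+ k = 0) ->
  forall t0, t0 \in S -> dl t0 = 0.
Proof.
move=> uS szS Hk t0 t0S.
have H (f : {poly R}) : (size f <= n.+1)%N -> \sum_(t <- S) dl t * f.[t] = 0.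
  move=> szf.
  under eq_bigr => t _ do rewrite (horner_coef_wide _ szf) mulr_sumr.
  rewrite exchange_big /= big1 // => k _.
  under eq_bigr => t _ do rewrite mulrCA.
  by rewrite -mulr_sumr Hk ?mulr0 // -ltnS.
have := H (Lp S t0); rewrite (@Lp_size S t0 t0S) => /(_ szS).
rewrite (bigD1_seq t0) //= big1_seq.
  by rewrite addr0 Lp_evt => /eqP; rewrite mulf_eq0 (negbTE (prod_nz S t0 uS)) orbF => /eqP.
by move=> t /andP[tt0 tS]; rewrite Lp_ev // mulr0.
Qed.


Lemma prod_pos a (s : seq R) : all (fun y => y < a) s -> 0 < \prod_(y <- s) (a - y).
Proof.
elim: s => [|y s IH] /=; first by rewrite big_nil ltr01.
by case/andP=> ya /IH; rewrite big_cons; apply: mulr_gt0; rewrite subr_gt0.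
Qed.

Lemma prod_neg a (s : seq R) : all (fun y => a < y) s ->
  0 < (-1) ^+ size s * \prod_(y <- s) (a - y).
Proof.
elim: s => [|y s IH] /=; first by rewrite big_nil expr0 mulr1 ltr01.
case/andP=> ya /IH H; rewrite big_cons exprS.
have -> : -1 * (-1) ^+ size s * ((a - y) * \prod_(j <- s) (a - j)) =
  (y - a) * ((-1) ^+ size s * \prod_(j <- s) (a - j)) by ring.
by apply: mulr_gt0; rewrite ?subr_gt0.
Qed.

Lemma sign_w (v : seq R) i : sorted <%R v -> (i < size v)%N ->
  0 < (-1) ^+ (size v - i.+1) * \prod_(s <- rem (nth 0 v i) v) (nth 0 v i - s).
Proof.
move=> sv iv; set x := nth 0 v i.
have uv : uniq v by apply: (sorted_uniq lt_trans ltxx).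
rewrite remE index_uniq // big_cat /=.
have : pairwise <%R v by rewrite -sorted_pairwise //; apply: lt_trans.
rewrite -{1}(cat_take_drop i v) (drop_nth 0 iv) -/x pairwise_cat pairwise_cons.
rewrite allrel_consr => /and3P[/andP[Ht _] _ /andP[Hd _]].
rewrite mulrCA; apply: mulr_gt0; first exact: prod_pos.
by rewrite -size_drop; apply: prod_neg.
Qed.


Lemma distrib (V : lmodType R) (S : seq R) n (x : nat -> R) (Q : pred nat)
  (a : nat -> R) (g : R -> V) :
  uniq S -> (forall i, (i < n)%N -> Q i -> x i \in S) ->
  \sum_(t <- S) (\sum_(i < n | (x i == t) && Q i) a i) *: g t =
  \sum_(i < n | Q i) a i *: g (x i).
Proof.
move=> uS HS.
under eq_bigr => t _ do rewrite scaler_suml big_mkcond /=.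
rewrite exchange_big /= [RHS]big_mkcond /=; apply: eq_bigr => i _.
case Qi: (Q i); last by rewrite big1 // => t _; rewrite andbF.
rewrite (bigD1_seq (x i)) ?HS //= eqxx big1_seq ?addr0 // => t /andP[tx _].
by rewrite eq_sym (negbTE tx).
Qed.

Lemma distribR (S : seq R) n (x : nat -> R) (Q : pred nat)
  (a : nat -> R) (g : R -> R) :
  uniq S -> (forall i, (i < n)%N -> Q i -> x i \in S) ->
  \sum_(t <- S) (\sum_(i < n | (x i == t) && Q i) a i) * g t =
  \sum_(i < n | Q i) a i * g (x i).
Proof.
move=> uS HS.
under eq_bigr => t _ do rewrite mulr_suml big_mkcond /=.
rewrite exchange_big /= [RHS]big_mkcond /=; apply: eq_bigr => i _.
case Qi: (Q i); last by rewrite big1 // => t _; rewrite andbF.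
rewrite (bigD1_seq (x i)) ?HS //= eqxx big1_seq ?addr0 // => t /andP[tx _].
by rewrite eq_sym (negbTE tx).
Qed.

Lemma distrib1 (S : seq R) n (x : nat -> R) (Q : pred nat) (a : nat -> R) :
  uniq S -> (forall i, (i < n)%N -> Q i -> x i \in S) ->
  \sum_(t <- S) (\sum_(i < n | (x i == t) && Q i) a i) = \sum_(i < n | Q i) a i.
Proof.
move=> uS HS.
under eq_bigr => t _ do rewrite big_mkcond /=.
rewrite exchange_big /= [RHS]big_mkcond /=; apply: eq_bigr => i _.
case Qi: (Q i); last by rewrite big1 // => t _; rewrite andbF.
rewrite (bigD1_seq (x i)) ?HS //= eqxx big1_seq ?addr0 // => t /andP[tx _].
by rewrite eq_sym (negbTE tx).
Qed.

Lemma gamma_sumE d (S : seq R) (mu : R -> R) j :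
  (\sum_(t <- S) mu t *: gamma d t) 0 j = \sum_(t <- S) mu t * t ^+ j.+1.
Proof. by rewrite summxE; apply: eq_bigr => t _; rewrite !mxE. Qed.

Lemma proj_sum d (S : seq R) (mu : R -> R) :
  proj_last d (\sum_(t <- S) mu t *: gamma d.+1 t) = \sum_(t <- S) mu t *: gamma d t.
Proof.
apply/rowP => j; rewrite gamma_sumE mxE summxE.
by apply: eq_bigr => t _; rewrite !mxE.
Qed.

Lemma last_sum d (S : seq R) (mu : R -> R) :
  last_coord d (\sum_(t <- S) mu t *: gamma d.+1 t) = \sum_(t <- S) mu t * t ^+ d.+1.
Proof. by rewrite /last_coord gamma_sumE. Qed.

Lemma height_unique d (S : seq R) (lam : R -> R) p h :
  uniq S -> (size S <= d.+1)%N -> \sum_(t <- S) lam t = 1 ->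
  p = \sum_(t <- S) lam t *: gamma d t -> is_height d S p h ->
  h = \sum_(t <- S) lam t * t ^+ d.+1.
Proof.
move=> uS szS s1 Hp [q [[mu [_ [smu ->]]] [Hq <-]]].
rewrite last_sum; apply: eq_big_seq => t tS.
suff -> : mu t = lam t by [].
apply/eqP; rewrite -subr_eq0; apply/eqP.
apply: (@uniq_coeffs S d (fun t => mu t - lam t) uS szS _ t tS) => k kd.
case: k kd => [|k] kd.
  by under eq_bigr => s _ do rewrite expr0 mulr1; rewrite sumrB smu s1 subrr.
under eq_bigr => s _ do rewrite mulrBl; rewrite sumrB.
by rewrite -(gamma_sumE d S mu (Ordinal kd)) -(gamma_sumE d S lam (Ordinal kd))
  -proj_sum Hq Hp subrr.
Qed.

End Lag.
Arguments wt {R}.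
Arguments Lp {R}.
Arguments sign_w {R}.
Arguments moments {R}.
Arguments distrib {R}.
Arguments distribR {R}.
Arguments height_unique {R}.
Arguments gamma_sumE {R}.
Arguments distrib1 {R}.

Theorem proposition2p3 (R : realFieldType) (d : nat) (sigma tau : seq R) :
  is_simplex d sigma -> is_simplex d tau ->
  (if odd d then interlacing_from tau sigma d.+2
            else interlacing_from sigma tau d.+2) ->
  exists p : 'rV[R]_d,
    in_conv d sigma p /\ in_conv d tau p /\
    (forall hs ht : R, is_height d sigma p hs -> is_height d tau p ht -> hs < ht).
Proof.
move=> /andP[us ss] /andP[ut st] Hint.
have [v [szv [sv Hv]]] : exists v : seq R, size v = d.+2 /\ sorted <%R v /\
    forall i, (i < d.+2)%N -> nth 0 v i \in (if odd (i + d) then tau else sigma).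
  move: Hint; case od: (odd d) => -[v [szv [sv Hv]]]; exists v; do 2 split => //;
  by move=> i /Hv; rewrite oddD od; case: (odd i).
have uv : uniq v by apply: (sorted_uniq lt_trans ltxx).
set n := d.+2.
set x := fun i : nat => nth 0 v i.
set w := fun i : nat => wt v (x i).
set P := fun i : nat => odd (i + d).
have wpos : forall i, (i < n)%N -> P i -> 0 < w i.
  move=> i ilt Pi; have := sign_w v i sv (leq_trans ilt (eq_leq (esym szv))).
  rewrite szv -signr_odd subSS oddB; last by rewrite -ltnS.
  rewrite /P oddD in Pi; move: Pi; rewrite /=.
  by case: (odd i); case: (odd d) => //= _; rewrite expr0 mul1r /w /wt invr_gt0.
have wneg : forall i, (i < n)%N -> ~~ P i -> w i < 0.
  move=> i ilt Pi; have := sign_w v i sv (leq_trans ilt (eq_leq (esym szv))).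
  rewrite szv -signr_odd subSS oddB; last by rewrite -ltnS.
  rewrite /P oddD in Pi; move: Pi; rewrite /=.
  by case: (odd i); case: (odd d) => //= _; rewrite expr1 mulN1r oppr_gt0 /w /wt invr_lt0.
have mom : forall k, (k < n)%N -> \sum_(i < n) w i * x i ^+ k = (k == d.+1)%:R.
  move=> k kn; have -> : d.+1 = (size v).-1 by rewrite szv. rewrite -(moments v k uv); last by rewrite szv.
  rewrite [RHS](big_nth 0) szv big_mkord.
  by [].
have Z0 : \sum_(i < n) w i = 0.
  transitivity (\sum_(i < n) w i * x i ^+ 0); last by rewrite mom.
  by apply: eq_bigr => i _; rewrite expr0 mulr1.
have Z1 : \sum_(i < n) w i * x i ^+ d.+1 = 1 by rewrite mom ?eqxx.
have Zv : \sum_(i < n) w i *: gamma d (x i) = 0.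
  apply/rowP => j; rewrite summxE !mxE.
  under eq_bigr => i _ do rewrite /gamma !mxE.
  rewrite mom; last by rewrite /n !ltnS ltnW.
  by rewrite eqSS (ltn_eqF (ltn_ord j)).
set W := \sum_(i < n | P i) w i.
have Wpos : 0 < W.
  pose i0 := if odd d then 0%N else 1%N.
  have i0n : (i0 < n)%N by rewrite /i0; case: (odd d).
  have Pi0 : P i0 by rewrite /P /i0; case E: (odd d); rewrite ?add0n ?add1n /= ?E.
  rewrite /W (bigD1 (Ordinal i0n)) //=; apply: ltr_wpDr; last exact: wpos.
  by apply: sumr_ge0 => i /andP[Pi _]; apply/ltW/wpos.
have Wn0 : W != 0 by rewrite gt_eqF.
set c := fun i : nat => w i / W.
have cpos : forall i, (i < n)%N -> P i -> 0 <= c i.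
  by move=> i ilt Pi; apply: divr_ge0; apply: ltW => //; apply: wpos.
have cneg : forall i, (i < n)%N -> ~~ P i -> 0 <= - c i.
  move=> i ilt Pi; rewrite oppr_ge0 /c pmulr_lle0 ?invr_gt0 //.
  exact/ltW/wneg.
have memT : forall i, (i < n)%N -> P i -> x i \in tau.
  by move=> i ilt Pi; have := Hv i ilt; rewrite /P in Pi; rewrite Pi.
have memS : forall i, (i < n)%N -> ~~ P i -> x i \in sigma.
  by move=> i ilt Pi; have := Hv i ilt; rewrite /P in Pi; rewrite (negbTE Pi).
set p := \sum_(i < n | P i) c i *: gamma d (x i).
have AB : \sum_(i < n | ~~ P i) w i *: gamma d (x i) =
          - \sum_(i < n | P i) w i *: gamma d (x i).
  by move: Zv; rewrite (bigID (fun i : 'I_n => P i)) /= => Zv; apply/eqP; rewrite -addr_eq0 addrC Zv.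
have SP : \sum_(i < n | ~~ P i) (- c i) *: gamma d (x i) = p.
  transitivity ((- W^-1) *: \sum_(i < n | ~~ P i) w i *: gamma d (x i)).
    by rewrite scaler_sumr; apply: eq_bigr => i _; rewrite scalerA /c mulrC mulNr.
  rewrite AB scalerN scaleNr opprK /p scaler_sumr; apply: eq_bigr => i _.
  by rewrite scalerA /c mulrC.
have ABs : \sum_(i < n | ~~ P i) w i = - W.
  by move: Z0; rewrite (bigID (fun i : 'I_n => P i)) /= => Z0; apply/eqP; rewrite -addr_eq0 addrC /W Z0.
have S1T : \sum_(i < n | P i) c i = 1 by rewrite /c -mulr_suml divff.
have S1S : \sum_(i < n | ~~ P i) - c i = 1.
  by rewrite sumrN /c -mulr_suml ABs mulNr divff // opprK.
have ABh : \sum_(i < n | P i) w i * x i ^+ d.+1 +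
           \sum_(i < n | ~~ P i) w i * x i ^+ d.+1 = 1.
  by move: Z1; rewrite (bigID (fun i : 'I_n => P i)).
have Hh : \sum_(i < n | ~~ P i) - c i * x i ^+ d.+1 <
          \sum_(i < n | P i) c i * x i ^+ d.+1.
  rewrite -subr_gt0 /c.
  under eq_bigr => i _ do rewrite mulrAC.
  under [X in _ - X]eq_bigr => i _ do rewrite mulNr mulrAC.
  rewrite sumrN opprK -!mulr_suml -mulrDl ABh mul1r invr_gt0 //.
pose lS := fun t => \sum_(i < n | (x i == t) && ~~ P i) - c i.
pose lT := fun t => \sum_(i < n | (x i == t) && P i) c i.
have sS : \sum_(t <- sigma) lS t = 1.
  by rewrite -S1S; apply: (distrib1 sigma n x (fun i => ~~ P i) (fun i => - c i) us memS).
have sT : \sum_(t <- tau) lT t = 1.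
  by rewrite -S1T; apply: (distrib1 tau n x P c ut memT).
have pS : p = \sum_(t <- sigma) lS t *: gamma d t.
  by rewrite -SP; symmetry; apply: (distrib _ sigma n x (fun i => ~~ P i) (fun i => - c i) _ us memS).
have pT : p = \sum_(t <- tau) lT t *: gamma d t.
  by symmetry; apply: (distrib _ tau n x P c _ ut memT).
exists p; split; last split.
- exists lS; split; last split => //.
  by move=> t _; apply: sumr_ge0 => i /andP[_ Pi]; apply: cneg.
- exists lT; split; last split => //.
  by move=> t _; apply: sumr_ge0 => i /andP[_ Pi]; apply: cpos.
- move=> hs ht Hs Ht.
  rewrite (height_unique d sigma lS p hs us ss sS pS Hs).
  rewrite (height_unique d tau lT p ht ut st sT pT Ht).
  have -> : \sum_(t <- sigma) lS t * t ^+ d.+1 = \sum_(i < n | ~~ P i) - c i * x i ^+ d.+1.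
    exact: (distribR sigma n x (fun i => ~~ P i) (fun i => - c i) (fun t => t ^+ d.+1) us memS).
  have -> : \sum_(t <- tau) lT t * t ^+ d.+1 = \sum_(i < n | P i) c i * x i ^+ d.+1.
    exact: (distribR tau n x P c (fun t => t ^+ d.+1) ut memT).
  exact: Hh.
Qed.
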